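(* Let $\phi$ be a Bernstein function with $\phi(0+)=0$ such that for some $\delta_0\in(0,1]$ and $c>0$, $c(R/r)^{\delta_0}\le\phi(R)/\phi(r)$ for all $0<r<R<\infty$. For $t,\lambda>0$ let $$g_t(\lambda)=\int_0^\infty\big(e^{-t\phi(\lambda r^2)}-e^{-t\phi(2\lambda r^2)}\big)e^{-r^2/4}r^{d-1}\,dr.$$ Then there is $N=N(c,\delta_0,d)$ such that $g_t(v^{-1})\le N\,t\,\phi(v^{-1})$ for all $t,v>0$. *)

(* Defs.v *)
From HB Require Import structures.
From mathcomp Require Import all_boot all_order all_algebra.
From mathcomp Require Import all_classical all_reals all_analysis.
Set Implicit Arguments. Unset Strict Implicit. Unset Printing Implicit Defensive.
Import Order.TTheory GRing.Theory Num.Theory.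
Import numFieldNormedType.Exports.
Local Open Scope classical_set_scope.
Local Open Scope ring_scope.

(* Bernstein function on (0,oo): nonnegative, C^oo on (0,oo), and
   (-1)^(n-1) phi^(n) >= 0 for all n >= 1.  Values at x <= 0 are irrelevant. *)
Definition bernstein {R : realType} (phi : R -> R) : Prop :=
  (forall x : R, 0 < x -> 0 <= phi x) /\
  (forall (n : nat) (x : R), 0 < x -> derivable (derive1n n phi) x 1) /\
  (forall (n : nat) (x : R), 0 < x -> 0 <= (-1) ^+ n * derive1n n.+1 phi x).

Definition g_fun {R : realType} (d : nat) (phi : R -> R) (t lambda : R) : \bar R :=
  (\int[@lebesgue_measure R]_(r in `]0%R, +oo[%classic)
     ((expR (- (t * phi (lambda * r ^+ 2))) - expR (- (t * phi (2 * lambda * r ^+ 2))))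
        * expR (- (r ^+ 2 / 4)) * r ^+ d.-1)%:E)%E.

(* Main.v *)
Require Import Defs.
From HB Require Import structures.
From mathcomp Require Import all_boot all_order all_algebra.
From mathcomp Require Import all_classical all_reals all_analysis.
From mathcomp Require Import ring lra measurable_realfun.
Import Order.TTheory GRing.Theory Num.Theory.
Import numFieldNormedType.Exports.
Local Open Scope classical_set_scope.
Local Open Scope ring_scope.
Lemma int_mono (R : realType) (D : set R) (f g : R -> \bar R) :
  (forall x, D x -> (f x <= g x)%E) -> (forall x, D x -> (0 <= g x)%E) ->
  (\int[@lebesgue_measure R]_(x in D) f x <= \int[@lebesgue_measure R]_(x in D) g x)%E.
Proof.
move=> fg g0.
rewrite [X in (X <= _)%E]integralE.
apply: (@le_trans _ _ (\int[@lebesgue_measure R]_(x in D) f^\+ x)%E).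
  have h0 : (0 <= \int[@lebesgue_measure R]_(x in D) f^\- x)%E.
    by apply: integral_ge0 => x _; exact: funeneg_ge0.
  by apply: le_trans (leeB (lexx _) h0) _; rewrite sube0.
rewrite ge0_integralE; last by move=> x _; exact: funepos_ge0.
rewrite ge0_integralE; last exact: g0.
apply: ereal_sup_le => _ [h hle <-]; exists h => //= x.
apply: le_trans (hle x) _.
rewrite /patch; case: ifP => // /set_mem Dx.
by rewrite funeposE ge_max fg //= g0.
Qed.
Lemma deriv_cont (R : realType) (f : R -> R) (a b : R) : 0 < a ->
  (forall x, 0 < x -> derivable f x 1) -> {within `[a, b], continuous f}.
Proof.
move=> a0 df; apply: continuous_in_subspaceT => x.
rewrite inE /= in_itv /= => /andP[ax _].
apply: differentiable_continuous; apply/derivable1_diffP; apply: df.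
exact: lt_le_trans ax.
Qed.

Lemma itvoo {R : realType} {a b z : R} : z \in `]a, b[ -> a < z /\ z < b.
Proof. by rewrite in_itv /= => /andP. Qed.

Lemma concave_bd (R : realType) (phi : R -> R) :
  (forall x, 0 < x -> derivable phi x 1) ->
  (forall x, 0 < x -> derivable (derive1 phi) x 1) ->
  (forall x, 0 < x -> (derive1 (derive1 phi)) x <= 0) ->
  (forall x, 0 < x -> 0 <= phi x) ->
  forall x y, 0 < x -> x <= y -> phi y <= phi x * (1 + 2 * (y - x) / x).
Proof.
move=> d1 d2 s2 p0 x y x0 xy.
have x2 : 0 < x / 2 by rewrite divr_gt0.
have x2x : x / 2 < x by lra.
have isd : forall z : R, 0 < z -> is_derive z 1 phi ((derive1 phi) z).
  by move=> z z0; rewrite derive1E; apply: derivableP; exact: d1.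
have [eta etaI eq1] := MVT x2x (fun (z : R) zI => isd z (lt_trans x2 (itvoo zI).1))
  (@deriv_cont R phi (x / 2) x x2 d1).
have eta0 : 0 < eta by apply: lt_trans x2 (itvoo etaI).1.
have etax : eta < x by exact: (itvoo etaI).2.
have hx2 := p0 _ x2.
have h1 : (derive1 phi) eta * x <= 2 * phi x by nra.
case: (ltgtP x y) xy => // [xlty _|<- _]; last first.
  rewrite subrr mulr0 mul0r addr0 mulr1 //.
have [xi xiI eq2] := MVT xlty (fun (z : R) zI => isd z (lt_trans x0 (itvoo zI).1))
  (@deriv_cont R phi x y x0 d1).
have xix : x < xi by exact: (itvoo xiI).1.
have h2 : (derive1 phi) xi <= (derive1 phi) eta.
  apply: (@ler0_derive1_nincr _ _ eta xi) => //.
  - move=> z zI; apply: d2; exact: lt_trans eta0 (itvoo zI).1.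
  - move=> z zI; apply: s2; exact: lt_trans eta0 (itvoo zI).1.
  - exact: (@deriv_cont R _ eta xi eta0 d2).
  - by apply: ltW; apply: lt_trans etax xix.
have h3 : (derive1 phi) xi * (y - x) <= (derive1 phi) eta * (y - x).
  by apply: ler_wpM2r => //; lra.
have h4 : (derive1 phi) eta * (y - x) * x <= 2 * phi x * (y - x) by nra.
have h5 : (derive1 phi) eta * (y - x) <= 2 * phi x * (y - x) / x.
  by rewrite ler_pdivlMr.
have -> : phi x * (1 + 2 * (y - x) / x) = phi x + 2 * phi x * (y - x) / x.
  by field; lra.
lra.
Qed.
Definition Pk {R : realType} (k : nat) : R :=
  expR 1 * (1 + 8 ^+ k.+1) + (k.+1)`!%:R.

Lemma poly_bd (R : realType) (k : nat) (r : R) : 0 <= r ->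
  (1 + r ^+ k.+1) * expR (- (r ^+ 2 / 4)) <= Pk k * expR (- r).
Proof.
move=> r0.
have E : expR (- r) = expR (r ^+ 2 / 4 - r) * expR (- (r ^+ 2 / 4)).
  by rewrite -expRD; congr expR; lra.
rewrite E mulrA; apply: ler_wpM2r; first exact: expR_ge0.
rewrite /Pk.
set K : R := (k.+1)`!%:R.
have K0 : 0 < K by rewrite /K ltr0n fact_gt0.
set X := expR (r ^+ 2 / 4 - r).
have X0 : 0 < X := expR_gt0 _.
have e0 : 0 < expR 1 :> R := expR_gt0 _.
have p8 : 0 <= 8 ^+ k.+1 :> R by rewrite exprn_ge0.
have KX : 0 <= K * X by rewrite mulr_ge0 // ltW.
case: (lerP r 8) => r8.
- have h1 : r ^+ k.+1 <= 8 ^+ k.+1.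
    by apply: lerXn2r; rewrite ?nnegrE.
  have h2 : expR (-1) <= X.
    by rewrite /X ler_expR; have := sqr_ge0 (r - 2); nra.
  have h3 : expR 1 * expR (-1) = 1 :> R by rewrite -expRD addrN expR0.
  have h4 : expR 1 * (1 + 8 ^+ k.+1) * expR (-1) <= expR 1 * (1 + 8 ^+ k.+1) * X.
    by apply: ler_wpM2l => //; rewrite mulr_ge0 // ?ltW //; lra.
  have h5 : expR 1 * (1 + 8 ^+ k.+1) * expR (-1) = 1 + 8 ^+ k.+1 :> R.
    by rewrite mulrAC h3 mul1r.
  rewrite mulrDl; lra.
- have h2 : expR r <= X by rewrite /X ler_expR; nra.
  have h3 := @expR_ge1Dxn R r k r0.
  have h4 : r ^+ k.+1 <= K * (expR r - 1).
    by rewrite -ler_pdivrMl // mulrC; lra.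
  have h5 : 1 <= expR 1 * (1 + 8 ^+ k.+1) :> R.
    have := expR_ge1Dx (1 : R); nra.
  have h6 : X <= expR 1 * (1 + 8 ^+ k.+1) * X by rewrite ler_peMl // ltW.
  have h7 : K * expR r <= K * X by rewrite ler_pM2l.
  have h8 : 1 <= expR r by rewrite -expR0 ler_expR.
  rewrite mulrDl; nra.
Qed.

Lemma phi_bd (R : realType) (phi : R -> R) (c delta0 : R) : 0 < c -> 0 < delta0 ->
  (forall x, 0 < x -> derivable phi x 1) ->
  (forall x, 0 < x -> derivable (derive1 phi) x 1) ->
  (forall x, 0 < x -> (derive1 (derive1 phi)) x <= 0) ->
  (forall x, 0 < x -> 0 <= phi x) ->
  (forall r R0 : R, 0 < r -> r < R0 -> c * powR (R0 / r) delta0 <= phi R0 / phi r) ->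
  forall lam r : R, 0 < lam -> 0 < r ->
    phi (2 * lam * r ^+ 2) <= phi lam * (c^-1 + 4 * r ^+ 2).
Proof.
move=> c0 dl0 d1 d2 s2 p0 hyp lam r l0 r0.
have y0 : 0 < 2 * lam * r ^+ 2 by rewrite !mulr_gt0 // exprn_gt0.
have pl0 := p0 _ l0.
have r2 : 0 <= r ^+ 2 by exact: sqr_ge0.
have ci : 0 < c^-1 by rewrite invr_gt0.
case: (ltP (2 * lam * r ^+ 2) lam) => hy.
- have h := hyp _ _ y0 hy.
  have pw : 1 <= powR (lam / (2 * lam * r ^+ 2)) delta0.
    have H1 : 1 <= lam / (2 * lam * r ^+ 2) by rewrite ler_pdivlMr // mul1r ltW.
    rewrite -{1}(powRr0 (lam / (2 * lam * r ^+ 2))); exact: (ler_powR H1 (ltW dl0)).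
  have py := p0 _ y0.
  case: (eqVneq (phi (2 * lam * r ^+ 2)) 0) => [->|pn0].
    by rewrite mulr_ge0 //; lra.
  have pyp : 0 < phi (2 * lam * r ^+ 2) by rewrite lt_def pn0.
  have h2 : c <= phi lam / phi (2 * lam * r ^+ 2).
    apply: le_trans h; rewrite ler_peMr //; exact: ltW.
  have h3 : c * phi (2 * lam * r ^+ 2) <= phi lam by rewrite -ler_pdivlMr // mulrC.
  have h4 : phi (2 * lam * r ^+ 2) <= phi lam / c by rewrite ler_pdivlMr // mulrC.
  have h5 : 0 <= phi lam * (4 * r ^+ 2) by rewrite mulr_ge0 //; lra.
  rewrite mulrDr; lra.
- have h := @concave_bd R phi d1 d2 s2 p0 _ _ l0 hy.
  apply: le_trans h _; apply: ler_wpM2l => //.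
  have -> : 1 + 2 * (2 * lam * r ^+ 2 - lam) / lam = 4 * r ^+ 2 - 1.
    by field; lra.
  lra.
Qed.

Theorem lemma3p2 (R : realType) (d : nat) (c delta0 : R) :
  (1 <= d)%N -> 0 < c -> 0 < delta0 -> delta0 <= 1 ->
  exists N : R, forall phi : R -> R,
    bernstein phi ->
    phi x @[x --> 0^'+] --> 0 ->
    (forall r R0 : R, 0 < r -> r < R0 -> c * powR (R0 / r) delta0 <= phi R0 / phi r) ->
    forall t v : R, 0 < t -> 0 < v ->
      (g_fun d phi t v^-1 <= (N * t * phi v^-1)%:E)%E.
Proof.
move=> d1 c0 dl0 dl1.
exists ((c^-1 + 4) * Pk d) => phi [p0 [pd ps]] _ hyp t v t0 v0.
have D1 : forall x, 0 < x -> derivable phi x 1 := fun x x0 => pd 0%N x x0.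
have D2 : forall x, 0 < x -> derivable (derive1 phi) x 1 := fun x x0 => pd 1%N x x0.
have S2 : forall x, 0 < x -> (derive1 (derive1 phi)) x <= 0.
  by move=> x x0; have := ps 1%N x x0; rewrite expr1 mulN1r oppr_ge0.
set lam := v^-1.
have l0 : 0 < lam by rewrite invr_gt0.
have pl0 := p0 _ l0.
have ci : 0 < c^-1 by rewrite invr_gt0.
have P0 : 0 < Pk d :> R.
  rewrite /Pk; apply: ltr_wpDr; first by rewrite ler0n.
  by rewrite mulr_gt0 ?expR_gt0 // ltr_wpDr // exprn_ge0.
set K := (c^-1 + 4) * Pk d * t * phi lam.
have K0 : 0 <= K by rewrite !mulr_ge0 // ?ltW //; lra.
rewrite /g_fun.
apply: (@le_trans _ _ (\int[@lebesgue_measure R]_(r in `]0%R, +oo[%classic)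
   (K * exponential_pdf 1 r)%:E)%E).
  apply: int_mono; last first.
    by move=> x _; rewrite lee_fin mulr_ge0 // exponential_pdf_ge0.
  move=> r /=; rewrite in_itv /= andbT => r0.
  rewrite lee_fin (exponential_pdfE _ (ltW r0)) mul1r mulN1r.
  set a := t * phi (lam * r ^+ 2).
  set b := t * phi (2 * lam * r ^+ 2).
  have a0 : 0 <= a.
    by rewrite /a mulr_ge0 //; [exact: ltW | apply: p0; rewrite mulr_gt0 // exprn_gt0].
  have ha : expR (- a) <= 1 by rewrite expR_le1; lra.
  have hb := expR_ge1Dx (- b).
  have G0 : 0 <= expR (- (r ^+ 2 / 4)) * r ^+ d.-1.
    by rewrite mulr_ge0 ?expR_ge0 // exprn_ge0 // ltW.
  have hbb : b <= t * (phi lam * (c^-1 + 4 * r ^+ 2)).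
    by rewrite /b; apply: ler_wpM2l; [exact: ltW | exact: (@phi_bd R phi c delta0 c0 dl0 D1 D2 S2 p0 hyp lam r l0 r0)].
  have r2 : 0 <= r ^+ 2 by exact: sqr_ge0.
  have hpoly : (c^-1 + 4 * r ^+ 2) * r ^+ d.-1 <= (c^-1 + 4) * (1 + r ^+ d.+1).
    have hE : r ^+ d.+1 = r ^+ d.-1 * r ^+ 2.
      by rewrite -exprD; congr (_ ^+ _); rewrite addn2 prednK.
    have rd0 : 0 <= r ^+ d.-1 by rewrite exprn_ge0 // ltW.
    have h1 : r ^+ d.-1 <= 1 + r ^+ d.+1.
      rewrite hE; case: (lerP r 1) => r1.
        have := exprn_ile1 d.-1 (ltW r0) r1; nra.
      have : 1 <= r ^+ 2 by rewrite -(expr1n R 2); apply: lerXn2r; rewrite ?nnegrE ?ltW.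
      nra.
    have h2 : c^-1 * r ^+ d.-1 <= c^-1 * (1 + r ^+ d.+1) by apply: ler_wpM2l; [exact: ltW | ].
    rewrite mulrDl hE; nra.
  have hp := @poly_bd R d r (ltW r0).
  rewrite -mulrA.
  apply: (@le_trans _ _ (b * (expR (- (r ^+ 2 / 4)) * r ^+ d.-1))).
    by apply: ler_wpM2r => //; lra.
  apply: (@le_trans _ _ (t * (phi lam * (c^-1 + 4 * r ^+ 2)) *
                         (expR (- (r ^+ 2 / 4)) * r ^+ d.-1))).
    exact: ler_wpM2r.
  have -> : t * (phi lam * (c^-1 + 4 * r ^+ 2)) * (expR (- (r ^+ 2 / 4)) * r ^+ d.-1)
     = (t * phi lam) * (((c^-1 + 4 * r ^+ 2) * r ^+ d.-1) * expR (- (r ^+ 2 / 4))).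
    by ring.
  have -> : K * expR (- r) = (t * phi lam) * ((c^-1 + 4) * (Pk d * expR (- r))).
    by rewrite /K; ring.
  apply: ler_wpM2l; first by apply: mulr_ge0 => //; exact: ltW.
  apply: (@le_trans _ _ ((c^-1 + 4) * (1 + r ^+ d.+1) * expR (- (r ^+ 2 / 4)))).
    by apply: ler_wpM2r => //; exact: expR_ge0.
  rewrite -mulrA; apply: ler_wpM2l => //; lra.
rewrite integral_mkcond.
apply: (@le_trans _ _ (\int[@lebesgue_measure R]_x (K * exponential_pdf 1 x)%:E)%E).
  apply: int_mono => x _; last by rewrite lee_fin mulr_ge0 // exponential_pdf_ge0.
  rewrite /patch; case: ifP => _ //; by rewrite lee_fin mulr_ge0 // exponential_pdf_ge0.
under eq_integral => x _ do rewrite EFinM.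
rewrite ge0_integralZl //.
- rewrite integral_exponential_pdf // mule1 lee_fin /K.
  by [].

- apply/measurable_EFinP; exact: measurable_exponential_pdf.
- by move=> x _; rewrite lee_fin exponential_pdf_ge0.
Qed.
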